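(* Let $K$ be a field complete with respect to a discrete valuation with finite residue field, and let $\mathcal T$ be the Bruhat–Tits tree of $PSL(2,K)$. Let $\Gamma$ be a group, $\rho:\Gamma\to PSL(2,K)$ a representation (acting on $\mathcal T$), and $\Upsilon\subset\Gamma$ a normal subgroup such that $\rho(\Upsilon)$ has a nonempty set of fixed points in $\mathcal T$. Suppose $\rho(\Gamma)$ is Zariski-dense in $PSL(2,K)$ and not contained in any compact subgroup of $PSL(2,K)$. Then $\rho(\Upsilon)$ is trivial.
   Context: The Bruhat–Tits tree $\mathcal T$: vertices are lattices ($\mathcal O_K$-submodules $M\subset K^2$ of rank two spanning $K^2$) up to multiplication by $K^*$; two classes are joined by an edge of length $1$ if representatives satisfy $M_1\subset M_2$ with $M_2/M_1\cong\mathcal O_K/\mathfrak m$. $SL(2,K)$ acts by $M\mapsto gM$, the center acting trivially, giving an isometric action of $PSL(2,K)$. *)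

(* Defs.v *)
From HB Require Import structures.
From mathcomp Require Import all_boot all_order all_algebra.
From mathcomp Require mpoly.
From Stdlib Require Rdefinitions.
Notation Real := Rdefinitions.R.
Set Implicit Arguments. Unset Strict Implicit. Unset Printing Implicit Defensive.
Import Order.TTheory GRing.Theory Num.Theory.
Local Open Scope ring_scope.

Definition is_group (G : Type) (mul : G -> G -> G) (inv : G -> G) (one : G) :=
  [/\ forall x y z, mul x (mul y z) = mul (mul x y) z,
      forall x, mul one x = x, forall x, mul x one = x,
      forall x, mul (inv x) x = one & forall x, mul x (inv x) = one].

Definition is_normal_subgroup (G : Type) (mul : G -> G -> G) (inv : G -> G)
  (one : G) (U : G -> Prop) :=
  [/\ U one, forall x y, U x -> U y -> U (mul x y), forall x, U x -> U (inv x)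
    & forall g x, U x -> U (mul (mul g x) (inv g))].

(* Discrete valuations.  v is only meaningful on K^*; v 0 is irrelevant
   (the valuation of 0 is +oo); [vge v x n] means  val(x) >= n.        *)
Section Val.
Variable K : fieldType.
Variable v : K -> int.

Definition vge (x : K) (n : int) : Prop := x = 0 \/ (n <= v x)%R.

Definition is_discrete_valuation : Prop :=
  [/\ forall x y, x != 0 -> y != 0 -> v (x * y) = v x + v y,
      forall x y, x != 0 -> y != 0 -> x + y != 0 ->
                  (Order.min (v x) (v y) <= v (x + y))%R
    & exists x, x != 0 /\ v x != 0].

Definition in_O (x : K) : Prop := vge x 0.

Definition cauchy_seq (a : nat -> K) : Prop :=
  forall n : int, exists N : nat, forall p q : nat, (N <= p)%N -> (N <= q)%N ->
    vge (a p - a q) n.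

Definition converges_to (a : nat -> K) (l : K) : Prop :=
  forall n : int, exists N : nat, forall p : nat, (N <= p)%N -> vge (a p - l) n.

Definition complete_val : Prop :=
  forall a, cauchy_seq a -> exists l, converges_to a l.

Definition finite_residue_field : Prop :=
  exists s : seq K, (forall r, r \in s -> in_O r) /\
    forall a, in_O a -> exists2 r, r \in s & vge (a - r) 1.

(* SL(2,K) and PSL(2,K).  An element of PSL(2,K) is represented by a
   matrix of SL(2,K), modulo sign.                                      *)
Definition in_SL2 (A : 'M[K]_2) : Prop := \det A = 1.

Definition psl_eq (A B : 'M[K]_2) : Prop := A = B \/ A = - B.

(* subsets of PSL(2,K) = sign-invariant subsets of SL(2,K) *)
Definition psl_set (S : 'M[K]_2 -> Prop) : Prop :=
  (forall A, S A -> in_SL2 A) /\ (forall A, S A -> S (- A)).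

Definition psl_subgroup (H : 'M[K]_2 -> Prop) : Prop :=
  [/\ psl_set H, H 1%:M, forall A B, H A -> H B -> H (A *m B)
    & forall A, H A -> H (invmx A)].

(* topology of K^4 = 'M[K]_2 induced by the valuation; subspace topology on
   SL(2,K); quotient topology on PSL(2,K) = SL(2,K)/{+-1} *)
Definition near_mx (A B : 'M[K]_2) (n : int) : Prop :=
  forall i j, vge (B i j - A i j) n.

Definition sl2_open (U : 'M[K]_2 -> Prop) : Prop :=
  forall A, U A -> in_SL2 A -> exists n : int,
    forall B, in_SL2 B -> near_mx A B n -> U B.

Definition psl_open (U : 'M[K]_2 -> Prop) : Prop := psl_set U /\ sl2_open U.

Definition psl_compact (C : 'M[K]_2 -> Prop) : Prop :=
  psl_set C /\
  forall (I : Type) (U : I -> 'M[K]_2 -> Prop),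
    (forall i, psl_open (U i)) ->
    (forall A, C A -> exists i, U i A) ->
    exists s : seq I, forall A, C A -> exists i, List.In i s /\ U i A.

(* Zariski density in (P)SL(2,K): a subset S of PSL(2,K), given by its
   (sign-invariant) preimage in SL(2,K) ⊂ K^4, is Zariski-dense iff every
   polynomial in the four matrix entries vanishing on S vanishes on SL(2,K). *)
Definition mx_coords (A : 'M[K]_2) : 'I_4 -> K :=
  fun k => A (inord (k %/ 2)) (inord (k %% 2)).

Definition zariski_dense_SL2 (S : 'M[K]_2 -> Prop) : Prop :=
  forall p : mpoly.mpoly 4 K,
    (forall A, S A -> mpoly.meval (mx_coords A) p = 0) ->
    forall A, in_SL2 A -> mpoly.meval (mx_coords A) p = 0.

Definition lat := 'cV[K]_2 -> Prop.

Definition set_eq (M N : lat) : Prop := forall x, M x <-> N x.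

Definition is_lattice (M : lat) : Prop :=
  exists E : 'M[K]_2, E \in unitmx /\
    set_eq M (fun x => exists a b, in_O a /\ in_O b /\
                 x = a *: col 0 E + b *: col 1 E).

Definition act_lat (g : 'M[K]_2) (M : lat) : lat :=
  fun x => exists y, M y /\ x = g *m y.

Definition scale_lat (c : K) (M : lat) : lat :=
  fun x => exists y, M y /\ x = c *: y.

(* same vertex: homothetic lattices *)
Definition homothetic (M N : lat) : Prop :=
  exists c : K, c != 0 /\ set_eq N (scale_lat c M).

(* M2 / M1 isomorphic to O/m, with M1 ⊂ M2 *)
Definition quot_residue (M1 M2 : lat) : Prop :=
  (forall x, M1 x -> M2 x) /\
  exists x0, M2 x0 /\
    (forall x, M2 x <-> exists y a, M1 y /\ in_O a /\ x = y + a *: x0) /\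
    (forall a, in_O a -> (M1 (a *: x0) <-> vge a 1)).

Definition adjacent (M N : lat) : Prop :=
  exists M' N', homothetic M M' /\ homothetic N N' /\ quot_residue M' N'.

(* points of the (geometric realization of the) tree:
   a vertex, or the point at distance t from M1 on the edge [M1, M2]. *)
Inductive tpoint :=
  | TVert of lat
  | TEdge of lat & lat & Real.

Definition valid_point (p : tpoint) : Prop :=
  match p with
  | TVert M => is_lattice M
  | TEdge M1 M2 t => [/\ is_lattice M1, is_lattice M2, adjacent M1 M2
                       & (Rdefinitions.Rlt Rdefinitions.R0 t /\ Rdefinitions.Rlt t Rdefinitions.R1)]
  end.

Definition same_point (p q : tpoint) : Prop :=
  match p, q with
  | TVert M, TVert N => homothetic M N
  | TEdge M1 M2 t, TEdge N1 N2 s =>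
      (homothetic M1 N1 /\ homothetic M2 N2 /\ t = s) \/
      (homothetic M1 N2 /\ homothetic M2 N1 /\ t = Rdefinitions.Rminus Rdefinitions.R1 s)
  | _, _ => False
  end.

Definition act_point (g : 'M[K]_2) (p : tpoint) : tpoint :=
  match p with
  | TVert M => TVert (act_lat g M)
  | TEdge M1 M2 t => TEdge (act_lat g M1) (act_lat g M2) t
  end.

Definition fixes_point (g : 'M[K]_2) (p : tpoint) : Prop :=
  same_point (act_point g p) p.

End Val.

(* Main.v *)
Require Import Defs.
From HB Require Import structures.
From mathcomp Require Import all_boot all_order all_algebra.
From mathcomp Require Import zify ring lra.
From mathcomp Require Import mpoly.
From Stdlib Require Import Classical IndefiniteDescription.
Set Implicit Arguments. Unset Strict Implicit. Unset Printing Implicit Defensive.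
Import Order.TTheory GRing.Theory Num.Theory.
Local Open Scope ring_scope.

Section ValLemmas.
Variable K : fieldType.
Variable v : K -> int.
Hypothesis hv : is_discrete_valuation v.

Lemma vM x y : x != 0 -> y != 0 -> v (x * y) = v x + v y.
Proof. by case: hv => h _ _; apply: h. Qed.

Lemma vD x y : x != 0 -> y != 0 -> x + y != 0 -> Order.min (v x) (v y) <= v (x + y).
Proof. by case: hv => _ h _; apply: h. Qed.

Lemma v1 : v 1 = 0.
Proof.
have := vM (oner_neq0 K) (oner_neq0 K); rewrite mulr1 => h.
have : v 1 + v 1 - v 1 = v 1 - v 1 by rewrite -h.
by rewrite addrK subrr.
Qed.

Lemma vN1 : v (-1) = 0.
Proof.
have hn : (-1 : K) != 0 by rewrite oppr_eq0 oner_neq0.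
have := vM hn hn; rewrite mulrNN mulr1 v1 => h.
have : v (-1) * 2 = 0 by rewrite mulr2n mulrDr mulr1 h.
by move/eqP; rewrite mulf_eq0 /= => /orP[/eqP //|].
Qed.

Lemma vN x : v (- x) = v x.
Proof.
have [->|hx] := eqVneq x 0; first by rewrite oppr0.
have hn : (-1 : K) != 0 by rewrite oppr_eq0 oner_neq0.
by rewrite -mulN1r vM // vN1 add0r.
Qed.

Lemma vV x : x != 0 -> v x^-1 = - v x.
Proof.
move=> hx; have hi : x^-1 != 0 by rewrite invr_eq0.
have := vM hx hi; rewrite mulfV // v1 => h.
lia.
Qed.

Lemma vge_le x n m : vge v x n -> m <= n -> vge v x m.
Proof. by move=> [->|h] hmn; [left|right; apply: le_trans h]. Qed.

Lemma vge_v x : vge v x (v x).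
Proof. by right. Qed.

Lemma vge0 n : vge v 0 n.
Proof. by left. Qed.

Lemma vge_eq0 x : (forall n, vge v x n) -> x = 0.
Proof.
move=> h; case: (h (v x + 1)) => // hl; exfalso.
by move: hl; rewrite -subr_ge0 opprD addrA subrr add0r oppr_ge0 ler10.
Qed.

Lemma vgeN x n : vge v x n -> vge v (- x) n.
Proof. by case=> [->|h]; [left; rewrite oppr0|right; rewrite vN]. Qed.

Lemma vgeD x y n : vge v x n -> vge v y n -> vge v (x + y) n.
Proof.
case=> [->|hx]; first by rewrite add0r.
case=> [->|hy]; first by rewrite addr0; right.
have [->|hxy] := eqVneq (x + y) 0; first by left.
right.
have [->|x0] := eqVneq x 0; first by rewrite add0r.
have [->|y0] := eqVneq y 0; first by rewrite addr0.
apply: le_trans (vD x0 y0 hxy).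
by rewrite le_min hx hy.
Qed.

Lemma vgeB x y n : vge v x n -> vge v y n -> vge v (x - y) n.
Proof. by move=> hx hy; apply: vgeD => //; apply: vgeN. Qed.

Lemma vgeM x y n m : vge v x n -> vge v y m -> vge v (x * y) (n + m).
Proof.
case=> [->|hx]; first by rewrite mul0r; left.
case=> [->|hy]; first by rewrite mulr0; left.
have [->|x0] := eqVneq x 0; first by rewrite mul0r; left.
have [->|y0] := eqVneq y 0; first by rewrite mulr0; left.
by right; rewrite vM // lerD.
Qed.

Lemma vgeMv x y n : vge v y n -> vge v (x * y) (v x + n).
Proof. by apply: vgeM; right. Qed.

Lemma vge_sum (I : Type) (r : seq I) (P : pred I) (F : I -> K) n :
  (forall i, P i -> vge v (F i) n) -> vge v (\sum_(i <- r | P i) F i) n.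
Proof.
move=> h; elim/big_rec: _ => [|i x Pi hx]; first exact: vge0.
by apply: vgeD => //; apply: h.
Qed.

Lemma vge_of_sq x n : n <= 0 -> vge v (x * x) n -> vge v x n.
Proof.
move=> hn [/eqP|h]; first by rewrite mulf_eq0 orbb => /eqP ->; left.
have [->|x0] := eqVneq x 0; first by left.
right; move: h; rewrite vM // => h.
rewrite leNgt; apply/negP => hlt.
lia.
Qed.

Lemma vge_scale x c n : c != 0 -> vge v (c * x) n -> vge v x (n - v c).
Proof.
move=> c0 [/eqP|h]; first by rewrite mulf_eq0 (negbTE c0) /= => /eqP ->; left.
have [->|x0] := eqVneq x 0; first by left.
right; move: h; rewrite vM // => h.
lia.
Qed.

End ValLemmas.

Lemma big_ord2 (R : nmodType) (F : 'I_2 -> R) : \sum_(i < 2) F i = F 0 + F 1.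
Proof. rewrite big_ord_recl big_ord1; congr (_ + F _); exact: val_inj. Qed.

Lemma ord2P (i : 'I_2) : i = 0 \/ i = 1.
Proof. case: i => [[|[|k]] hk]; [left|right|by []]; exact: val_inj. Qed.

Lemma det2 (R : comNzRingType) (A : 'M[R]_2) : \det A = A 0 0 * A 1 1 - A 0 1 * A 1 0.
Proof.
rewrite (expand_det_row _ 0) big_ord2 /cofactor !det_mx11 !mxE /=.
have -> : lift 0 (0 : 'I_1) = 1 :> 'I_2 by exact: val_inj.
have -> : lift 1 (0 : 'I_1) = 0 :> 'I_2 by exact: val_inj.
rewrite /= expr0 expr1 mul1r mulN1r. ring.
Qed.

Ltac mx2 := apply/matrixP; let i := fresh "i" in let j := fresh "j" in
  intros i j; destruct (ord2P i) as [-> | ->]; destruct (ord2P j) as [-> | ->];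
  rewrite ?(mxE, big_ord2) /=.

Definition adj2 (R : pzRingType) (A : 'M[R]_2) : 'M[R]_2 :=
  \matrix_(i < 2, j < 2) (if i == 0 then (if j == 0 then A 1 1 else - A 0 1)
                          else (if j == 0 then - A 1 0 else A 0 0)).

Lemma mulmx_adj2 (R : comNzRingType) (A : 'M[R]_2) : A *m adj2 A = (\det A)%:M.
Proof. rewrite det2; mx2; rewrite ?mulr1n ?mulr0n; ring. Qed.

Lemma mul_adj2mx (R : comNzRingType) (A : 'M[R]_2) : adj2 A *m A = (\det A)%:M.
Proof. rewrite det2; mx2; rewrite ?mulr1n ?mulr0n; ring. Qed.

Lemma det1_unit (R : fieldType) (A : 'M[R]_2) : \det A = 1 -> A \in unitmx.
Proof. by move=> h; rewrite unitmxE h unitr1. Qed.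

Lemma invmx_adj2 (R : fieldType) (A : 'M[R]_2) : \det A = 1 -> invmx A = adj2 A.
Proof.
move=> h; have hu := det1_unit h.
by rewrite -[RHS]mul1mx -(mulVmx hu) -mulmxA mulmx_adj2 h mulmx1.
Qed.

Lemma adj2B (R : comNzRingType) (A B : 'M[R]_2) : adj2 (A - B) = adj2 A - adj2 B.
Proof. mx2; ring. Qed.

Lemma adj2N (R : comNzRingType) (A : 'M[R]_2) : adj2 (- A) = - adj2 A.
Proof. mx2; ring. Qed.

Lemma det2N (R : comNzRingType) (A : 'M[R]_2) : \det (- A) = \det A.
Proof. rewrite !det2 !mxE; ring. Qed.

Lemma map_adj2 (R S : comNzRingType) (f : {rmorphism R -> S}) (A : 'M[R]_2) :
  map_mx f (adj2 A) = adj2 (map_mx f A).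
Proof. mx2; rewrite ?rmorphN //. Qed.

Section PEQ.
Variable K : fieldType.
Implicit Types A B C D : 'M[K]_2.

Lemma peq_refl A : psl_eq A A. Proof. by left. Qed.
Lemma peq_sym A B : psl_eq A B -> psl_eq B A.
Proof. by case=> ->; [left|right; rewrite opprK]. Qed.
Lemma peq_trans A B C : psl_eq A B -> psl_eq B C -> psl_eq A C.
Proof. by case=> ->; case=> ->; rewrite ?opprK; [left|right|right|left]. Qed.
Lemma peq_N A B : psl_eq A B -> psl_eq A (- B).
Proof. by case=> ->; [right; rewrite opprK|left]. Qed.
Lemma peq_mul A B C D : psl_eq A B -> psl_eq C D -> psl_eq (A *m C) (B *m D).
Proof.
by case=> ->; case=> ->; rewrite ?mulNmx ?mulmxN ?opprK; [left|right|right|left].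
Qed.
Lemma peq_adj2 A B : psl_eq A B -> psl_eq (adj2 A) (adj2 B).
Proof. by case=> ->; [left|right; rewrite adj2N]. Qed.
Lemma peq_det A B : psl_eq A B -> \det A = \det B.
Proof. by case=> ->; rewrite ?det2N. Qed.
End PEQ.

Section Grp.
Variable K : fieldType.
Variables (Gam : Type) (mul : Gam -> Gam -> Gam) (inv : Gam -> Gam) (one : Gam).
Hypothesis hGam : is_group mul inv one.
Variable rho : Gam -> 'M[K]_2.
Hypothesis hrhoSL : forall g, in_SL2 (rho g).
Hypothesis hrho_hom : forall g h, psl_eq (rho (mul g h)) (rho g *m rho h).

Lemma rho_one : psl_eq (rho one) 1%:M.
Proof.
have h := hrho_hom one one.
have e : mul one one = one by case: hGam => _ h1 _ _ _; apply: h1.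
rewrite e in h.
have hu : adj2 (rho one) *m rho one = 1%:M by rewrite mul_adj2mx (hrhoSL one).
have := peq_mul (peq_refl (adj2 (rho one))) h.
by rewrite hu mulmxA hu mul1mx => /peq_sym.
Qed.

Lemma rho_inv g : psl_eq (rho (inv g)) (adj2 (rho g)).
Proof.
have h := hrho_hom g (inv g).
have e : mul g (inv g) = one by case: hGam => _ _ _ _ h1; apply: h1.
rewrite e in h.
have h2 := peq_trans (peq_sym h) rho_one.
have := peq_mul (peq_refl (adj2 (rho g))) h2.
rewrite mulmxA mul_adj2mx (hrhoSL g) mul1mx mulmx1 => h3; exact: h3.
Qed.

Lemma rho_conj g u : psl_eq (rho (mul (mul g u) (inv g))) (rho g *m rho u *m adj2 (rho g)).
Proof.
apply: peq_trans (hrho_hom _ _) _.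
apply: peq_mul; first exact: hrho_hom.
exact: rho_inv.
Qed.

Lemma rho_mul g h : psl_eq (rho g *m rho h) (rho (mul g h)).
Proof. exact: peq_sym. Qed.

End Grp.

Definition mk2 (R : Type) (a b c d : R) : 'M[R]_2 :=
  \matrix_(i < 2, j < 2) (if i == 0 then (if j == 0 then a else b) else (if j == 0 then c else d)).

Lemma det_mk2 (R : comNzRingType) (a b c d : R) : \det (mk2 a b c d) = a * d - b * c.
Proof. by rewrite det2 !mxE. Qed.

Lemma adj2M (R : comNzRingType) (A B : 'M[R]_2) : adj2 (A *m B) = adj2 B *m adj2 A.
Proof. mx2; ring. Qed.

Lemma det2M (R : comNzRingType) (A B : 'M[R]_2) : \det (A *m B) = \det A * \det B.
Proof. exact: det_mulmx. Qed.

Section Unip.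
Variable K : fieldType.
Variable x : K.
Hypotheses (hx0 : x != 0) (hx1 : x != 1).

Lemma quad_zero (p0 p1 p2 : K) :
  (forall t, p0 + t * p1 + t * t * p2 = 0) -> p1 = 0 /\ p2 = 0.
Proof.
move=> h.
have h0 := h 0; rewrite !mul0r !addr0 in h0; rewrite h0 in h.
have h1 := h 1; rewrite !mul1r add0r in h1.
have h2 := h x; rewrite add0r in h2.
have e : x * (x - 1) * p2 = 0.
  have -> : x * (x - 1) * p2 = (x * p1 + x * x * p2) - x * (p1 + p2) by ring.
  by rewrite h2 h1 mulr0 subrr.
have hxm1 : x - 1 != 0 by rewrite subr_eq0.
move/eqP: e; rewrite !mulf_eq0 (negbTE hx0) (negbTE hxm1) /= => /eqP e.
by split => //; move: h1; rewrite e addr0.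
Qed.

Variable psi : 'M[K]_2 -> K.
Hypothesis psiD : forall X Y, psi (X + Y) = psi X + psi Y.
Hypothesis psiZ : forall c X, psi (c *: X) = c * psi X.

Lemma step (A : 'M[K]_2) :
  (forall B, \det B = 1 -> psi (B *m A *m adj2 B) = 0) ->
  psi (mk2 (A 1 0) (A 1 1 - A 0 0) 0 (- A 1 0)) = 0 /\
  A 1 0 * psi (delta_mx 0 1) = 0.
Proof.
move=> h.
have key : forall t, psi A + t * psi (mk2 (A 1 0) (A 1 1 - A 0 0) 0 (- A 1 0))
                  + t * t * psi ((- A 1 0) *: delta_mx 0 1) = 0.
  move=> t; rewrite -!psiZ -!psiD -[RHS](h (mk2 1 t 0 1)); last by rewrite det_mk2; ring.
  congr psi; mx2; rewrite ?mulr1n ?mulr0n; ring.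
have [-> e2] := quad_zero key; split => //.
by move: e2; rewrite psiZ mulNr => /eqP; rewrite oppr_eq0 => /eqP.
Qed.

Lemma core (A : 'M[K]_2) :
  ~ (A 0 1 = 0 /\ A 1 0 = 0 /\ A 0 0 = A 1 1) ->
  (forall B, \det B = 1 -> psi (B *m A *m adj2 B) = 0) ->
  psi (delta_mx 0 1) = 0.
Proof.
move=> hA h.
have [e1 e2] := step h.
have [c0|c0] := eqVneq (A 1 0) 0; last first.
  by move/eqP: e2; rewrite mulf_eq0 (negbTE c0) /= => /eqP.
have [ad|ad] := eqVneq (A 1 1 - A 0 0) 0; last first.
  have : psi (mk2 (A 1 0) (A 1 1 - A 0 0) 0 (- A 1 0)) = (A 1 1 - A 0 0) * psi (delta_mx 0 1).
    rewrite -psiZ; congr psi; mx2; rewrite ?c0; ring.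
  by rewrite e1 => /esym/eqP; rewrite mulf_eq0 (negbTE ad) /= => /eqP.
have b0 : A 0 1 != 0.
  apply/negP => /eqP b0; apply: hA; split => //; split => //.
  by apply/eqP; rewrite eq_sym -subr_eq0 ad.
pose w : 'M[K]_2 := mk2 0 1 (-1) 0.
have hw : \det w = 1 by rewrite det_mk2; ring.
pose A' := w *m A *m adj2 w.
have h' : forall B, \det B = 1 -> psi (B *m A' *m adj2 B) = 0.
  move=> B hB; rewrite -(h (B *m w)); last by rewrite det2M hB hw mulr1.
  by rewrite /A' adj2M !mulmxA.
have [_ e2'] := step h'.
have : A' 1 0 = - A 0 1.
  rewrite /A' /w !(mxE, big_ord2) /=; ring.
move=> e; move/eqP: e2'; rewrite e mulf_eq0 oppr_eq0 (negbTE b0) /= => /eqP //.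
Qed.

End Unip.

Lemma core2 (K : fieldType) (x : K) (hx0 : x != 0) (hx1 : x != 1) (psi : 'M[K]_2 -> K)
  (psiD : forall X Y, psi (X + Y) = psi X + psi Y) (psiZ : forall c X, psi (c *: X) = c * psi X)
  (A : 'M[K]_2) :
  ~ (A 0 1 = 0 /\ A 1 0 = 0 /\ A 0 0 = A 1 1) ->
  (forall B, \det B = 1 -> psi (B *m A *m adj2 B) = 0) ->
  psi (delta_mx 1 0) = 0.
Proof.
move=> hA h.
pose w : 'M[K]_2 := mk2 0 1 (-1) 0.
have hw : \det w = 1 by rewrite det_mk2; ring.
pose psi' X := psi (w *m X *m adj2 w).
have e : psi' (delta_mx 0 1) = - psi (delta_mx 1 0).
  rewrite /psi' -mulN1r -psiZ; congr psi; mx2; rewrite ?mulr1n ?mulr0n; ring.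
suff : psi' (delta_mx 0 1) = 0 by rewrite e => /eqP; rewrite oppr_eq0 => /eqP.
apply: (@core K x hx0 hx1 psi' _ _ A hA).
- by move=> X Y; rewrite /psi' mulmxDr mulmxDl psiD.
- by move=> c X; rewrite /psi' -scalemxAr -scalemxAl psiZ.
move=> B hB; rewrite /psi' -(h (w *m B)); last by rewrite det2M hB hw mulr1.
by rewrite adj2M !mulmxA.
Qed.


Section Zar.
Variable K : fieldType.

Definition Gm : 'M[{mpoly K[4]}]_2 := \matrix_(i < 2, j < 2) 'X_(inord (i * 2 + j)).

Lemma eval_Gm (B : 'M[K]_2) : map_mx (meval (mx_coords B)) Gm = B.
Proof.
apply/matrixP => i j; rewrite !mxE mevalXU /mx_coords.
have hij : (i * 2 + j < 4)%N by case: (ord2P i) => ->; case: (ord2P j) => ->.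
rewrite inordK //.
have e1 : ((i * 2 + j) %/ 2 = i)%N.
  by case: (ord2P i) => ->; case: (ord2P j) => ->.
have e2 : ((i * 2 + j) %% 2 = j)%N.
  by case: (ord2P i) => ->; case: (ord2P j) => ->.
by rewrite e1 e2 !inord_val.
Qed.

Lemma zar_poly (S : 'M[K]_2 -> Prop) (C : 'M[K]_(2 * 2)) (j : 'I_(2 * 2)) (A0 : 'M[K]_2) :
  zariski_dense_SL2 S ->
  (forall A, S A -> (mxvec (A *m A0 *m adj2 A) *m C) 0 j = 0) ->
  forall B, in_SL2 B -> (mxvec (B *m A0 *m adj2 B) *m C) 0 j = 0.
Proof.
move=> hz hS.
pose P : {mpoly K[4]} :=
  (mxvec (Gm *m map_mx (fun c => c%:MP) A0 *m adj2 Gm) *m map_mx (fun c => c%:MP) C) 0 j.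
have eP : forall B, meval (mx_coords B) P = (mxvec (B *m A0 *m adj2 B) *m C) 0 j.
  move=> B; rewrite /P.
  have ev : forall m n (M : 'M[K]_(m, n)), map_mx (meval (mx_coords B)) (map_mx (fun c => c%:MP_[4]) M) = M.
    by move=> m n M; apply/matrixP => a b; rewrite !mxE mevalC.
  have -> : forall (M : 'M[{mpoly K[4]}]_(1, 2 * 2)), meval (mx_coords B) (M 0 j) = (map_mx (meval (mx_coords B)) M) 0 j.
    by move=> M; rewrite mxE.
  by rewrite map_mxM map_mxvec !map_mxM map_adj2 eval_Gm !ev.
rewrite /zariski_dense_SL2 in hz.
move=> B hB; rewrite -eP; apply: hz => // A hA; rewrite eP; exact: hS.
Qed.
End Zar.

Lemma ex_max (X : Type) (P : X -> Prop) (f : X -> nat) (b : nat) :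
  (exists x, P x) -> (forall x, P x -> (f x <= b)%N) ->
  exists x, P x /\ forall y, P y -> (f y <= f x)%N.
Proof.
move=> [x0 Px0] hb.
suff : forall k x, P x -> (b - f x <= k)%N -> exists x, P x /\ forall y, P y -> (f y <= f x)%N.
  by move/(_ (b - f x0)%N x0 Px0 (leqnn _)).
elim=> [|k IH] x Px hk.
  exists x; split => // y Py; have := hb y Py; have := hb x Px; lia.
case: (classic (exists y, P y /\ (f x < f y)%N)) => [[y [Py hy]]|hn].
  apply: (IH y Py); have := hb y Py; lia.
exists x; split => // y Py; case: (leqP (f y) (f x)) => // hlt.
by exfalso; apply: hn; exists y.
Qed.

Section Span.
Variable K : fieldType.
Variables (Gam : Type) (one : Gam) (rho : Gam -> 'M[K]_2) (Ups : Gam -> Prop).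

Definition Fam (s : seq Gam) : 'M[K]_(size s, 2 * 2) :=
  \matrix_(k < size s) mxvec (rho (nth one s k)).

Definition good (s : seq Gam) := forall k : 'I_(size s), Ups (nth one s k).

Lemma fam_ext (s : seq Gam) u : (Fam s <= Fam (u :: s))%MS.
Proof.
apply/row_subP => k; rewrite rowK.
have -> : nth one s k = nth one (u :: s) (lift ord0 k) by [].
by rewrite -(rowK (fun k => mxvec (rho (nth one (u :: s) k)))); apply: row_sub.
Qed.

Lemma fam_head (s : seq Gam) u : (mxvec (rho u) <= Fam (u :: s))%MS.
Proof.
have -> : rho u = rho (nth one (u :: s) (ord0 : 'I_(size (u :: s)))) by [].
by rewrite -(rowK (fun k => mxvec (rho (nth one (u :: s) k)))); apply: row_sub.
Qed.

Lemma fam_max : exists s, good s /\ forall u, Ups u -> (mxvec (rho u) <= Fam s)%MS.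
Proof.
have g0 : good [::] by case.
have [s [gs hs]] := @ex_max _ good (fun s => \rank (Fam s)) (2 * 2)
   (ex_intro _ [::] g0) (fun s _ => rank_leq_col (Fam s)).
exists s; split => // u hu; apply/negPn/negP => hn.
have gus : good (u :: s).
  by move=> [[|k] hk] //=; apply: (gs (Ordinal (hk : (k < size s)%N))).
have := hs _ gus; rewrite leqNgt => /negP; apply; apply: rank_ltmx.
rewrite ltmxE fam_ext /=; apply/negP => h; move/negP: hn; apply.
exact: submx_trans (fam_head s u) h.
Qed.

Lemma span_or_fun (s : seq Gam) (X : 'M[K]_2) :
  (forall u, Ups u -> (mxvec (rho u) <= Fam s)%MS) ->
  (exists c : 'I_(size s) -> K, X = \sum_k c k *: rho (nth one s k)) \/
  (exists (C : 'M[K]_(2 * 2)) (j : 'I_(2 * 2)), (mxvec X *m C) 0 j != 0 /\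
     forall u, Ups u -> (mxvec (rho u) *m C) 0 j = 0).
Proof.
move=> hs.
case: (boolP (mxvec X <= Fam s)%MS) => hX.
  left; case/submxP: hX => D hD.
  exists (fun k => D 0 k).
  rewrite -[X]mxvecK hD mulmx_sum_row linear_sum /=.
  by apply: eq_bigr => k _; rewrite rowK linearZ /= mxvecK.
right; exists (cokermx (Fam s)).
move: hX; rewrite submxE => hX.
have [j hj] : exists j, (mxvec X *m cokermx (Fam s)) 0 j != 0.
  apply/not_all_not_ex => hall; move/negP: hX; apply; apply/eqP/matrixP => i j.
  rewrite (ord1 i) [in RHS]mxE; case: (eqVneq ((mxvec X *m cokermx (Fam s)) 0 j) 0) => // hne.
  by exfalso; apply: (hall j).
exists j; split => // u hu.
by move: (hs u hu); rewrite submxE => /eqP ->; rewrite mxE.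
Qed.

End Span.

Section Latt.
Variable K : fieldType.
Variable v : K -> int.
Hypothesis hv : is_discrete_valuation v.
Variable pi : K.
Hypotheses (hpi0 : pi != 0) (hpi : 1 <= v pi).

Definition OO (x : 'cV[K]_2) := in_O v (x 0 0) /\ in_O v (x 1 0).
Definition latE (E : 'M[K]_2) : lat K := fun x => exists y, OO y /\ x = E *m y.

Definition cv2 (a b : K) : 'cV[K]_2 := \col_(i < 2) (if i == 0 then a else b).

Lemma in_O_pi : in_O v pi.
Proof. by right; apply: le_trans hpi. Qed.

Lemma OO_scale a y : in_O v a -> OO y -> OO (a *: y).
Proof.
move=> ha [h0 h1]; split; rewrite mxE.
  by have := vgeM hv ha h0; rewrite addr0.
by have := vgeM hv ha h1; rewrite addr0.
Qed.

Lemma OO_add y z : OO y -> OO z -> OO (y + z).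
Proof. by move=> [a0 a1] [b0 b1]; split; rewrite /in_O mxE; apply: (vgeD hv). Qed.

Lemma OO_delta j : OO (delta_mx j 0).
Proof.
split; rewrite mxE; case: (_ && _); rewrite /= ?mulr1n ?mulr0n; try exact: vge0.
all: by right; rewrite (v1 hv).
Qed.

Lemma latE_scale E a x : in_O v a -> latE E x -> latE E (a *: x).
Proof. by move=> ha [y [hy ->]]; exists (a *: y); split; [apply: OO_scale|rewrite scalemxAr]. Qed.

Lemma lattice_repr M : is_lattice v M -> exists E, E \in unitmx /\ set_eq M (latE E).
Proof.
move=> [E [hE hM]]; exists E; split => // x; rewrite hM; split.
  move=> [a [b [ha [hb ->]]]]; exists (cv2 a b); split; first by split; rewrite mxE.
  apply/matrixP => i j; rewrite (ord1 j) !(mxE, big_ord2) /=; ring.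
move=> [y [[h0 h1] ->]]; exists (y 0 0), (y 1 0); do 2! split => //.
apply/matrixP => i j; rewrite (ord1 j) !(mxE, big_ord2) /=; ring.
Qed.

Lemma Einj (E : 'M[K]_2) (a b : 'cV[K]_2) : E \in unitmx -> E *m a = E *m b -> a = b.
Proof. by move=> hE h; rewrite -(mulKmx hE a) h mulKmx. Qed.

Lemma keyL (E B : 'M[K]_2) (g : K) :
  E \in unitmx -> \det B = 1 -> g != 0 ->
  (forall x, latE E x -> exists z, latE E z /\ g *: x = B *m z) ->
  (forall z, latE E z -> latE E ((pi / g) *: (B *m z))) ->
  forall i j, vge v ((invmx E *m B *m E) i j) (- v pi).
Proof.
move=> hE hB g0 P1 P2.
set X := invmx E *m B *m E.
have hX : \det X = 1.
  by rewrite /X !det_mulmx det_inv hB mulr1 mulVf // -unitfE -unitmxE.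
have EX : forall y : 'cV[K]_2, E *m (X *m y) = B *m (E *m y).
  by move=> y; rewrite /X !mulmxA mulmxV // mul1mx.
have hO : forall a b, vge v (g * X a b) 0.
  have hc : forall j, forall i, vge v (g * adj2 X i j) 0.
    move=> j i.
    have [z [[y [hy ->]] hz]] := P1 _ (ex_intro _ _ (conj (OO_delta j) erefl)).
    have e : g *: delta_mx j 0 = X *m y.
      apply: (Einj hE); by rewrite -scalemxAr hz EX.
    have e2 : g *: (adj2 X *m delta_mx j 0) = y.
      by rewrite scalemxAr e mulmxA mul_adj2mx hX mul1mx.
    have : (g *: (adj2 X *m (delta_mx j 0 : 'cV[K]_2))) i 0 = g * adj2 X i j.
      by rewrite -colE !mxE.
    rewrite e2 => <-; case: (ord2P i) => ->; [exact: hy.1|exact: hy.2].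
  move=> a b.
  case: (ord2P a) => ->; case: (ord2P b) => ->.
  - by have := hc 1 1; rewrite !mxE.
  - by have := vgeN hv (hc 1 0); rewrite !mxE /= mulrN opprK.
  - by have := vgeN hv (hc 0 1); rewrite !mxE /= mulrN opprK.
  - by have := hc 0 0; rewrite !mxE.
have vg : 0 <= v g.
  have h2 : vge v (g * g) 0.
    have -> : g * g = (g * X 0 0) * (g * X 1 1) - (g * X 0 1) * (g * X 1 0).
      by rewrite -[LHS]mulr1 -hX det2; ring.
    apply: (vgeB hv).
    - by have := vgeM hv (hO 0 0) (hO 1 1); rewrite addr0.
    - by have := vgeM hv (hO 0 1) (hO 1 0); rewrite addr0.
  case: h2 => [/eqP|]; first by rewrite mulf_eq0 orbb (negbTE g0).
  rewrite (vM hv g0 g0); lia.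
move=> i j.
have [z [[w [hw ->]] hz]] :
    exists z, latE E z /\ (pi / g) *: (B *m (E *m delta_mx j 0)) = z.
  by eexists; split; [apply: P2; exists (delta_mx j 0); split; [exact: OO_delta|]|].
have e : X *m delta_mx j 0 = (g / pi) *: w.
  apply: (Einj hE).
  rewrite EX -scalemxAr -hz scalerA.
  by rewrite -mulrA (mulrA pi^-1) mulVf // mul1r mulfV // scale1r.
have -> : X i j = g / pi * w i 0.
  have -> : g / pi * w i 0 = ((g / pi) *: w) i 0 by rewrite mxE.
  by rewrite -e -colE [RHS]mxE.
have hw' : vge v (w i 0) 0 by case: (ord2P i) => ->; [exact: hw.1|exact: hw.2].
have := vgeMv hv (g / pi) hw'; rewrite addr0 (vM hv g0) ?invr_eq0 // (vV hv hpi0) => h.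
apply: (vge_le h); lia.
Qed.

End Latt.

Section Fix.
Variable K : fieldType.
Variable v : K -> int.
Hypothesis hv : is_discrete_valuation v.
Variable pi : K.
Hypotheses (hpi0 : pi != 0) (hpi : 1 <= v pi).

Lemma scale_lat_E (E : 'M[K]_2) c M : c != 0 -> set_eq M (latE v E) ->
  forall x, scale_lat c M x <-> latE v (c *: E) x.
Proof.
move=> c0 hM x; split.
  by move=> [y [/hM [z [hz ->]] ->]]; exists z; split => //; rewrite scalemxAl.
move=> [z [hz ->]]; exists (E *m z); split; first by apply/hM; exists z.
by rewrite scalemxAl.
Qed.

Lemma unit_scale (E : 'M[K]_2) c : c != 0 -> E \in unitmx -> c *: E \in unitmx.
Proof.
move=> c0 hE; rewrite unitmxE detZ unitrM unitrX ?unitfE //=.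
by rewrite -unitfE -unitmxE.
Qed.

Lemma fix_bound p : valid_point v p ->
  exists E, E \in unitmx /\ forall B, \det B = 1 -> fixes_point B p ->
    forall i j, vge v ((invmx E *m B *m E) i j) (- v pi).
Proof.
case: p => [M|M1 M2 t] /=.
- move=> /(lattice_repr) [E [hE hM]]; exists E; split => // B hB.
  move=> [c [c0 hc]].
  apply: (keyL hv hpi0 hpi hE hB (g := c^-1)); first by rewrite invr_eq0.
  + move=> x /hM /hc [y [[z [hz ->]] ->]]; exists z; split; first exact/hM.
    by rewrite scalerA mulVf // scale1r.
  + move=> z /hM hz.
    have : M (c *: (B *m z)) by apply/hc; exists (B *m z); split => //; exists z.
    move/hM => h; rewrite invrK; have := latE_scale hv (in_O_pi hpi) h.
    by rewrite scalerA.
- move=> [hM1 hM2 [M1' [M2' [[c1 [c10 h1]] [[c2 [c20 h2]] [hsub [x0 [hx0 [hM2' hx0']]]]]]]] _].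
  have [E1 [hE1 hE1M]] := lattice_repr hM1.
  have [E2 [hE2 hE2M]] := lattice_repr hM2.
  set E := c1 *: E1.
  have hE : E \in unitmx by apply: unit_scale.
  have hM1' : set_eq M1' (latE v E).
    by move=> x; rewrite h1; apply: scale_lat_E.
  have hpiM2 : forall x, M2' x -> M1' (pi *: x).
    move=> x /hM2' [y [a [hy [ha ->]]]].
    rewrite scalerDr scalerA.
    have hy' : latE v E (pi *: y) by apply: (latE_scale hv (in_O_pi hpi)); apply/hM1'.
    have ha' : M1' ((pi * a) *: x0).
      apply/hx0'.
        by have := vgeM hv (in_O_pi hpi) ha; rewrite addr0.
      have := vgeM hv (vge_v v pi) ha; rewrite addr0 => h; exact: vge_le h hpi.
    move/hM1': ha' => [w [hw ew]]; move: hy' => [w' [hw' ew']].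
    apply/hM1'; exists (w' + w); split; first exact: OO_add.
    by rewrite mulmxDr -ew -ew'.
  exists E; split => // B hB [[[c [c0 hc]] _]|[[c [c0 hc]] _]].
  + (* B M1 ~ M1 *)
    apply: (keyL hv hpi0 hpi hE hB (g := c^-1)); first by rewrite invr_eq0.
    * move=> x /hM1' /h1 [y [/hc [y' [[z [hz ->]] ->]] ->]].
      exists (c1 *: z); split; first by apply/hM1'; apply/h1; exists z.
      rewrite !scalerA -scalemxAr; congr (_ *: _); by field.
    * move=> z /hM1' /h1 [w [hw ->]].
      have : M1 (c *: (B *m w)) by apply/hc; exists (B *m w); split => //; exists w.
      move=> hcw.
      have : M1' (c1 *: (c *: (B *m w))) by apply/h1; exists (c *: (B *m w)).
      move/hM1' => h; have := latE_scale hv (in_O_pi hpi) h.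
      by rewrite invrK !scalerA -scalemxAr scalerA -mulrA [c1 * c]mulrC mulrA.
  + (* B M1 ~ M2 *)
    apply: (keyL hv hpi0 hpi hE hB (g := c1 / (c2 * c))).
      by rewrite mulf_neq0 // invr_eq0 mulf_neq0.
    * move=> x /hM1' /hsub /h2 [y [/hc [y' [[z [hz ->]] ->]] ->]].
      exists (c1 *: z); split; first by apply/hM1'; apply/h1; exists z.
      rewrite !scalerA -scalemxAr; congr (_ *: _).
      by field; rewrite ?c10 ?c20 ?c0 ?mulf_neq0.
    * move=> z /hM1' /h1 [w [hw ->]].
      have : M2 (c *: (B *m w)) by apply/hc; exists (B *m w); split => //; exists w.
      move=> hcw.
      have : M2' (c2 *: (c *: (B *m w))) by apply/h2; exists (c *: (B *m w)).
      move/hpiM2/hM1' => h.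
      have -> : (pi / (c1 / (c2 * c))) *: (B *m (c1 *: w)) = pi *: (c2 *: (c *: (B *m w))).
        rewrite -scalemxAr !scalerA; congr (_ *: _).
        by field; rewrite ?c10 ?c20 ?c0 ?mulf_neq0.
      exact: h.
Qed.

End Fix.

Lemma ex_min (P : nat -> Prop) : (exists n, P n) -> exists n, P n /\ forall m, P m -> (n <= m)%N.
Proof.
move=> [n Pn].
suff : forall k, (forall j, (j <= k)%N -> P j -> exists n, P n /\ forall m, P m -> (n <= m)%N).
  by move=> h; apply: (h n n).
elim=> [|k IH] j hj Pj.
  exists j; split => // m _; move: hj; rewrite leqn0 => /eqP ->; done.
case: (classic (exists i, P i /\ (i < j)%N)) => [[i [Pi hi]]|hn].
  by apply: (IH i) => //; lia.
exists j; split => // m Pm; case: (leqP j m) => // hlt.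
by exfalso; apply: hn; exists m.
Qed.

Section Unif.
Variable K : fieldType.
Variable v : K -> int.
Hypothesis hv : is_discrete_valuation v.

Lemma unif : exists pi, [/\ pi != 0, 0 < v pi & forall y, y != 0 -> 0 < v y -> v pi <= v y].
Proof.
have [x [x0 vx]] : exists x, x != 0 /\ v x != 0 by case: hv.
have [y [y0 vy]] : exists y, y != 0 /\ 0 < v y.
  case: (ltrgtP (v x) 0) vx => // h _.
    by exists x^-1; rewrite invr_eq0 (vV hv x0) oppr_gt0.
  by exists x.
pose P n := exists z, z != 0 /\ v z = (n.+1)%:Z.
have hP : exists n, P n.
  exists (`|v y| - 1)%N; exists y; split => //; lia.
have [n [[z [z0 vz]] hmin]] := ex_min hP.
exists z; split => //; first by rewrite vz.
move=> w w0 vw; have : P (`|v w| - 1)%N by exists w; split => //; lia.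
move/hmin; lia.
Qed.

Lemma vX x k : x != 0 -> v (x ^+ k) = k%:Z * v x.
Proof.
move=> x0; elim: k => [|k IH]; first by rewrite expr0 (v1 hv) mul0r.
rewrite exprS (vM hv x0) ?expf_neq0 // IH; lia.
Qed.

End Unif.

Section HB.
Variable K : fieldType.
Variable v : K -> int.
Hypothesis hv : is_discrete_valuation v.
Hypothesis hcomplete : complete_val v.
Hypothesis hres : finite_residue_field v.
Variable pi : K.
Hypotheses (hpi0 : pi != 0) (hpipos : 0 < v pi)
  (hpimin : forall y, y != 0 -> 0 < v y -> v pi <= v y).

Lemma split1 (t a c : K) (rs : seq K) :
  (forall r, r \in rs -> in_O v r) ->
  (forall a, in_O v a -> exists2 r, r \in rs & vge v (a - r) 1) ->
  t != 0 -> vge v (a - c) (v t) ->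
  exists k : 'I_(size rs), vge v (a - (c + t * nth 0 rs k)) (v t + v pi).
Proof.
move=> hrs1 hrs2 t0 hac.
pose b := (a - c) / t.
have eb : t * b = a - c by rewrite /b mulrC -mulrA mulVf ?mulr1.
have hb : in_O v b.
  have h : vge v (t * b) (v t) by rewrite eb.
  by have := vge_scale hv t0 h; rewrite subrr.
have [r rin hr] := hrs2 b hb.
have hi : (index r rs < size rs)%N by rewrite index_mem.
exists (Ordinal hi) => /=.
rewrite nth_index //.
have -> : a - (c + t * r) = t * (b - r) by rewrite mulrBr eb; ring.
apply: (vgeMv hv).
case: hr => [->|h]; first by left.
have [->|n0] := eqVneq (b - r) 0; first by left.
by right; apply: hpimin => //; apply: lt_le_trans h.
Qed.

Definition box (C : 'M[K]_2) (n : int) (Y : 'M[K]_2) := forall i j, vge v (Y i j - C i j) n.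

Lemma split_box (C : 'M[K]_2) (t : K) : t != 0 ->
  exists Ds : seq 'M[K]_2, (forall D, D \in Ds -> box C (v t) D) /\
    forall Y, box C (v t) Y -> exists2 D, D \in Ds & box D (v t + v pi) Y.
Proof.
move=> t0; have [rs [hrs1 hrs2]] := hres.
pose mk (f : {ffun 'I_2 * 'I_2 -> 'I_(size rs)}) : 'M[K]_2 :=
  C + t *: \matrix_(i, j) nth 0 rs (f (i, j)).
exists [seq mk f | f <- enum {ffun 'I_2 * 'I_2 -> 'I_(size rs)}]; split.
  move=> D /mapP [f _ ->] i j; rewrite /mk !mxE addrAC subrr add0r.
  have hr : in_O v (nth 0 rs (f (i, j))).
    by apply: hrs1; apply: mem_nth.
  by have := vgeMv hv t hr; rewrite addr0.
move=> Y hY.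
have [g hg] := @fin_all_exists _ (fun _ => 'I_(size rs))
  (fun ij k => vge v (Y ij.1 ij.2 - (C ij.1 ij.2 + t * nth 0 rs k)) (v t + v pi))
  (fun ij => split1 hrs1 hrs2 t0 (hY ij.1 ij.2)).
exists (mk [ffun ij => g ij]).
  by apply: map_f; rewrite mem_enum.
move=> i j; rewrite /mk !mxE ffunE; exact: (hg (i, j)).
Qed.


Lemma boxT C n Y Z n' : box C n Y -> box Y n' Z -> n <= n' -> box C n Z.
Proof.
move=> h1 h2 hn i j.
have -> : Z i j - C i j = (Z i j - Y i j) + (Y i j - C i j) by ring.
apply: (vgeD hv); last exact: h1.
exact: vge_le (h2 i j) hn.
Qed.

Lemma heine_borel (H : 'M[K]_2 -> Prop) (N0 : int) :
  (forall Y, H Y -> in_SL2 Y) ->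
  (forall Y, H Y -> forall i j, vge v (Y i j) N0) ->
  (forall (Ys : nat -> 'M[K]_2) L, (forall k, H (Ys k)) ->
      (forall n, exists k0, forall k, (k0 <= k)%N -> near_mx v (Ys k) L n) -> H L) ->
  forall (I : Type) (U : I -> 'M[K]_2 -> Prop), (forall i, psl_open v (U i)) ->
  (forall A, H A -> exists i, U i A) ->
  exists s : seq I, forall A, H A -> exists i, List.In i s /\ U i A.
Proof.
move=> HSL Hb Hcl I U hU hcov.
apply: NNPP => nocov.
pose m := `|N0|%N.
pose t0 := (pi ^+ m)^-1.
pose s k := t0 * pi ^+ k.
have t00 : t0 != 0 by rewrite invr_eq0 expf_neq0.
have s0 : forall k, s k != 0 by move=> k; rewrite mulf_neq0 // expf_neq0.
have vs : forall k, v (s k) = v t0 + k%:Z * v pi.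
  by move=> k; rewrite /s (vM hv t00) ?expf_neq0 // (vX hv _ hpi0).
have vt0 : v t0 <= N0.
  rewrite /t0 (vV hv) ?expf_neq0 // (vX hv _ hpi0).
  have : 1 <= v pi by lia.
  rewrite /m; nia.
pose lev k := v (s k).
have levS : forall k, lev k.+1 = lev k + v pi by move=> k; rewrite /lev !vs; lia.
have lev_mono : forall k q, (k <= q)%N -> lev k <= lev q.
  by move=> k q hkq; rewrite /lev !vs; nia.
have lev_big : forall n, exists k, n <= lev k.
  move=> n; exists `|n - v t0|%N; rewrite /lev vs; nia.
pose cover C n := exists fs : seq I, forall A, H A -> box C n A -> exists i, List.In i fs /\ U i A.
pose bad C k := ~ cover C (lev k).
have union : forall (Ds : seq 'M[K]_2) n, (forall D, D \in Ds -> cover D n) ->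
    exists fs : seq I, forall A, H A -> (exists2 D, D \in Ds & box D n A) ->
      exists i, List.In i fs /\ U i A.
  elim=> [|D Ds IH] n hD.
    by exists [::] => A _ [D].
  have [fs1 h1] := hD D (mem_head _ _).
  have [fs2 h2] : exists fs2 : seq I, forall A, H A -> (exists2 D0, D0 \in Ds & box D0 n A) ->
      exists i, List.In i fs2 /\ U i A.
    by apply: IH => D' hD'; apply: hD; rewrite in_cons hD' orbT.
  exists (List.app fs1 fs2) => A HA [D' hD' hbox].
  move: hD'; rewrite in_cons => /orP [/eqP eD|hD'].
    rewrite eD in hbox; have [i [hi hUi]] := h1 A HA hbox.
    by exists i; split => //; apply: List.in_or_app; left.
  have [i [hi hUi]] := h2 A HA (ex_intro2 _ _ D' hD' hbox).
  by exists i; split => //; apply: List.in_or_app; right.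
have bad_step : forall C k, bad C k -> exists D, box C (lev k) D /\ bad D k.+1.
  move=> C k hb; apply: NNPP => hn; apply: hb.
  have [Ds [hDs1 hDs2]] := split_box C (s0 k).
  have hc : forall D, D \in Ds -> cover D (lev k.+1).
    move=> D hD; apply: NNPP => hnc; apply: hn; exists D; split; first exact: hDs1.
    exact: hnc.
  have [fs hfs] := union Ds _ hc.
  exists fs => A HA hA; apply: hfs => //.
  have [D hD hDA] := hDs2 A hA; exists D => //.
  by rewrite levS.
have hst : forall C k, exists D, bad C k -> box C (lev k) D /\ bad D k.+1.
  move=> C k; case: (classic (bad C k)) => hb.
    by have [D hD] := bad_step C k hb; exists D.
  by exists C.
pose st C k := proj1_sig (constructive_indefinite_description _ (hst C k)).
have hstP : forall C k, bad C k -> box C (lev k) (st C k) /\ bad (st C k) k.+1.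
  by move=> C k; rewrite /st; case: constructive_indefinite_description.
pose Cs := fix f k := if k is k'.+1 then st (f k') k' else (0 : 'M[K]_2).
have badCs : forall k, bad (Cs k) k.
  elim=> [|k IH] /=; last exact: (hstP _ _ IH).2.
  move=> [fs hfs]; apply: nocov; exists fs => A HA; apply: hfs => // i j.
  rewrite mxE subr0; apply: vge_le (Hb A HA i j) _.
  by rewrite /lev vs mul0r addr0.
have closeCs : forall k, box (Cs k) (lev k) (Cs k.+1).
  by move=> k; exact: (hstP _ _ (badCs k)).1.
have cauchy : forall k q, (k <= q)%N -> box (Cs k) (lev k) (Cs q).
  move=> k; elim=> [|q IH] hkq.
    by move: hkq; rewrite leqn0 => /eqP ->; move=> i j; rewrite subrr; left.
  case: (leqP k q) => hk.
    apply: boxT (IH hk) (closeCs q) _; exact: lev_mono.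
  have -> : k = q.+1 by apply/eqP; rewrite eqn_leq hkq hk.
  by move=> i j; rewrite subrr; left.
have hlim : forall ij : 'I_2 * 'I_2, exists l, converges_to v (fun k => Cs k ij.1 ij.2) l.
  move=> [i j]; apply: hcomplete => n.
  have [k hk] := lev_big n; exists k => p q hp hq.
  have -> : Cs p i j - Cs q i j = (Cs p i j - Cs k i j) - (Cs q i j - Cs k i j) by ring.
  apply: (vgeB hv); apply: vge_le hk.
    exact: cauchy hp i j.
  exact: cauchy hq i j.
have [l hl] := fin_all_exists hlim.
pose L : 'M[K]_2 := \matrix_(i, j) l (i, j).
have boxL : forall k, box (Cs k) (lev k) L.
  move=> k i j; have [N hN] := hl (i, j) (lev k).
  pose p := maxn N k.
  have -> : L i j - Cs k i j = (Cs p i j - Cs k i j) - (Cs p i j - l (i, j)).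
    by rewrite mxE; ring.
  apply: (vgeB hv); first by apply: cauchy; rewrite leq_maxr.
  by apply: hN; rewrite leq_maxl.
have hY : forall k, exists Y, H Y /\ box (Cs k) (lev k) Y.
  move=> k; apply: NNPP => hn; apply: (badCs k); exists [::] => A HA hA.
  by exfalso; apply: hn; exists A.
pose Ys k := proj1_sig (constructive_indefinite_description _ (hY k)).
have hYs : forall k, H (Ys k) /\ box (Cs k) (lev k) (Ys k).
  by move=> k; rewrite /Ys; case: constructive_indefinite_description.
have HL : H L.
  apply: (Hcl Ys L); first by move=> k; exact: (hYs k).1.
  move=> n; have [k0 hk0] := lev_big n; exists k0 => k hk i j.
  have -> : L i j - Ys k i j = (L i j - Cs k i j) - (Ys k i j - Cs k i j) by ring.
  apply: (vge_le _ (le_trans hk0 (lev_mono _ _ hk))).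
  apply: (vgeB hv); [exact: boxL|exact: (hYs k).2].
have [i hi] := hcov L HL.
have [_ hop] := hU i.
have [n hn] := hop L hi (HSL L HL).
have [k hk] := lev_big n.
apply: (badCs k); exists [:: i] => A HA hA; exists i; split; first by left.
apply: hn; first exact: HSL.
move=> a b; apply: (vge_le _ hk).
have -> : A a b - L a b = (A a b - Cs k a b) - (L a b - Cs k a b) by ring.
by apply: (vgeB hv); [exact: hA|exact: boxL].
Qed.
End HB.

Section Bounds.
Variable K : fieldType.
Variable v : K -> int.
Hypothesis hv : is_discrete_valuation v.

Definition mxb (A : 'M[K]_2) (b : int) := forall i j, vge v (A i j) b.

Lemma mxb_ex (A : 'M[K]_2) : exists b, mxb A b.
Proof.
exists (Order.min (Order.min (v (A 0 0)) (v (A 0 1))) (Order.min (v (A 1 0)) (v (A 1 1)))).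
move=> i j; case: (ord2P i) => ->; case: (ord2P j) => ->; apply: vge_le (vge_v v _) _; lia.
Qed.

Lemma mxb_le A b b' : mxb A b -> b' <= b -> mxb A b'.
Proof. by move=> h hb i j; apply: vge_le (h i j) hb. Qed.

Lemma mxbM (A B : 'M[K]_2) a b : mxb A a -> mxb B b -> mxb (A *m B) (a + b).
Proof.
move=> hA hB i j; rewrite mxE; apply: (vge_sum hv) => k _; exact: (vgeM hv (hA i k) (hB k j)).
Qed.

Lemma mxbD (A B : 'M[K]_2) a : mxb A a -> mxb B a -> mxb (A + B) a.
Proof. by move=> hA hB i j; rewrite mxE; apply: (vgeD hv). Qed.

Lemma mxbN (A : 'M[K]_2) a : mxb A a -> mxb (- A) a.
Proof. by move=> hA i j; rewrite mxE; apply: (vgeN hv). Qed.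

Lemma mxb_adj2 (A : 'M[K]_2) a : mxb A a -> mxb (adj2 A) a.
Proof.
move=> hA i j; rewrite mxE; case: (ord2P i) => ->; case: (ord2P j) => -> /=;
  try apply: (vgeN hv); exact: hA.
Qed.

Lemma mxbZ (A : 'M[K]_2) a c b : vge v c b -> mxb A a -> mxb (c *: A) (b + a).
Proof. by move=> hc hA i j; rewrite mxE; apply: (vgeM hv). Qed.

Lemma mxb_sum n (c : 'I_n -> K) (M : 'I_n -> 'M[K]_2) b a :
  (forall k, vge v (c k) b) -> (forall k, mxb (M k) a) -> mxb (\sum_k c k *: M k) (b + a).
Proof.
move=> hc hM i j; rewrite summxE; apply: (vge_sum hv) => k _; rewrite mxE.
exact: (vgeM hv (hc k) (hM k i j)).
Qed.

Lemma cbound n (c : 'I_n -> K) : exists b, forall k, vge v (c k) b.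
Proof.
exists (- \sum_(k < n) (`|v (c k)|%:Z)) => k; apply: vge_le (vge_v v _) _.
rewrite (bigD1 k) //=.
have : 0 <= \sum_(i < n | i != k) (`|v (c i)|%:Z) by apply: sumr_ge0 => i _.
move: (\sum_(i < n | i != k) _) => S hS; move: (v (c k)) => a; lia.
Qed.

End Bounds.

Section Conj.
Variable K : fieldType.
Variable E : 'M[K]_2.
Hypothesis hE : E \in unitmx.
Definition cj (Y : 'M[K]_2) := invmx E *m Y *m E.
Definition ucj (Y : 'M[K]_2) := E *m Y *m invmx E.

Lemma cjK Y : ucj (cj Y) = Y.
Proof. by rewrite /ucj /cj !mulmxA (mulmxV hE) mul1mx -mulmxA (mulmxV hE) mulmx1. Qed.
Lemma ucjK Y : cj (ucj Y) = Y.
Proof. by rewrite /ucj /cj !mulmxA ?(mulmxV hE) ?(mulVmx hE) mul1mx -mulmxA ?(mulmxV hE) ?(mulVmx hE) mulmx1. Qed.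
Lemma cjM A B : cj (A *m B) = cj A *m cj B.
Proof. by rewrite /cj !mulmxA (mulmxK hE). Qed.
Lemma cj1 : cj 1%:M = 1%:M.
Proof. by rewrite /cj mulmx1 (mulVmx hE). Qed.
Lemma cjN A : cj (- A) = - cj A.
Proof. by rewrite /cj mulmxN mulNmx. Qed.
Lemma cjD A B : cj (A + B) = cj A + cj B.
Proof. by rewrite /cj mulmxDr mulmxDl. Qed.
Lemma cjB A B : cj (A - B) = cj A - cj B.
Proof. by rewrite cjD cjN. Qed.
Lemma cjZ c A : cj (c *: A) = c *: cj A.
Proof. by rewrite /cj -scalemxAr -scalemxAl. Qed.
Lemma cj_sum n (F : 'I_n -> 'M[K]_2) : cj (\sum_k F k) = \sum_k cj (F k).
Proof. by rewrite /cj mulmx_sumr mulmx_suml. Qed.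
Lemma det_cj A : \det (cj A) = \det A.
Proof.
rewrite /cj !det_mulmx det_inv mulrAC mulVf ?mul1r //.
by rewrite -unitfE -unitmxE.
Qed.
Lemma cj_adj2 A : \det A = 1 -> cj (adj2 A) = adj2 (cj A).
Proof.
move=> hA.
have h1 : cj A *m cj (adj2 A) = 1%:M by rewrite -cjM mulmx_adj2 hA cj1.
have h2 : adj2 (cj A) *m cj A = 1%:M by rewrite mul_adj2mx det_cj hA.
by rewrite -[LHS]mul1mx -h2 -mulmxA h1 mulmx1.
Qed.
Lemma det_ucj A : \det (ucj A) = \det A.
Proof. by rewrite -[in RHS](ucjK A) det_cj. Qed.
Lemma ucj_adj2 A : \det A = 1 -> ucj (adj2 A) = adj2 (ucj A).
Proof.
move=> hA; have hd : \det (ucj A) = 1 by rewrite det_ucj.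
by rewrite -{1}[A]ucjK -cj_adj2 // cjK.
Qed.
Lemma ucjM A B : ucj (A *m B) = ucj A *m ucj B.
Proof. by rewrite /ucj !mulmxA (mulmxKV hE). Qed.
Lemma ucjD A B : ucj (A + B) = ucj A + ucj B.
Proof. by rewrite /ucj mulmxDr mulmxDl. Qed.
Lemma ucjZ c A : ucj (c *: A) = c *: ucj A.
Proof. by rewrite /ucj -scalemxAr -scalemxAl. Qed.
End Conj.

Section Main.
Variable K : fieldType.
Variable v : K -> int.
Hypothesis hv : is_discrete_valuation v.
Variables (Gam : Type) (mul : Gam -> Gam -> Gam) (inv : Gam -> Gam) (one : Gam).
Hypothesis hGam : is_group mul inv one.
Variable rho : Gam -> 'M[K]_2.
Hypothesis hrhoSL : forall g, in_SL2 (rho g).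
Hypothesis hrho_hom : forall g h, psl_eq (rho (mul g h)) (rho g *m rho h).
Variable Ups : Gam -> Prop.
Hypothesis hUps : is_normal_subgroup mul inv one Ups.
Hypothesis hzar : zariski_dense_SL2 (fun A => exists g, psl_eq A (rho g)).
Variable E : 'M[K]_2.
Hypothesis hE : E \in unitmx.
Variable pi : K.
Hypotheses (hpi0 : pi != 0) (hpipos : 0 < v pi).
Variable u0 : Gam.
Hypotheses (hu0 : Ups u0) (hnt : ~ psl_eq (rho u0) 1%:M).

Lemma Ups_conj g u : Ups u -> Ups (mul (mul g u) (inv g)).
Proof. by case: hUps => _ _ _ h; apply: h. Qed.

Lemma nonscalar : ~ ((cj E (rho u0)) 0 1 = 0 /\ (cj E (rho u0)) 1 0 = 0 /\
                    (cj E (rho u0)) 0 0 = (cj E (rho u0)) 1 1).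
Proof.
set A0 := cj E (rho u0) => [[h01 [h10 h00]]].
have eA : A0 = (A0 0 0)%:M.
  apply/matrixP => i j; rewrite [RHS]mxE.
  case: (ord2P i) => ->; case: (ord2P j) => -> //=; rewrite ?h01 ?h10 ?h00 //.
set a := A0 0 0 in eA.
have er : rho u0 = a%:M.
  by rewrite -(cjK hE (rho u0)) -/A0 eA /ucj mul_mx_scalar -scalemxAl mulmxV // scalemx1.
have ha : a * a = 1.
  by have := hrhoSL u0; rewrite /in_SL2 er det2 !mxE /= ?mulr0n ?mulr0 ?subr0 ?mulr1n.
have : (a - 1) * (a + 1) = 0 by rewrite mulrDr mulrBl ha; ring.
move/eqP; rewrite mulf_eq0 => /orP [|] /eqP h.
  by apply: hnt; left; rewrite er; congr (_%:M); apply/eqP; rewrite -subr_eq0 h.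
apply: hnt; right; rewrite er (_ : a = -1) ?raddfN //.
by apply/eqP; rewrite -addr_eq0 h.
Qed.

Lemma phi_conj (C : 'M[K]_(2 * 2)) (j : 'I_(2 * 2)) :
  (forall u, Ups u -> (mxvec (rho u) *m C) 0 j = 0) ->
  forall B, in_SL2 B -> (mxvec (B *m rho u0 *m adj2 B) *m C) 0 j = 0.
Proof.
move=> hC; apply: zar_poly hzar _ => A [g hAg].
have e : A *m rho u0 *m adj2 A = rho g *m rho u0 *m adj2 (rho g).
  by case: hAg => ->; rewrite ?adj2N ?mulNmx ?mulmxN ?opprK.
rewrite e.
have := peq_sym (rho_conj hGam hrhoSL hrho_hom g u0).
case=> ->; first exact: hC (Ups_conj g hu0).
by rewrite linearN mulNmx mxE hC ?oppr0 //; apply: Ups_conj.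
Qed.

Lemma no_fun (a b : 'I_2) (C : 'M[K]_(2 * 2)) (j : 'I_(2 * 2)) : a != b ->
  (forall u, Ups u -> (mxvec (rho u) *m C) 0 j = 0) ->
  (mxvec (E *m delta_mx a b *m invmx E) *m C) 0 j = 0.
Proof.
move=> hab hC.
pose psi (Y : 'M[K]_2) := (mxvec (ucj E Y) *m C) 0 j.
have psiD : forall X Y, psi (X + Y) = psi X + psi Y.
  by move=> X Y; rewrite /psi (ucjD E) linearD mulmxDl mxE.
have psiZ : forall c X, psi (c *: X) = c * psi X.
  by move=> c X; rewrite /psi (ucjZ E) linearZ -scalemxAl mxE.
have hpsi : forall B, \det B = 1 -> psi (B *m cj E (rho u0) *m adj2 B) = 0.
  move=> B hB; rewrite /psi (ucjM hE (B *m cj E (rho u0))) (ucjM hE B) (ucj_adj2 hE) // (cjK hE).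
  by apply: phi_conj hC _ _; rewrite /in_SL2 (det_ucj hE).
have x1 : pi != 1.
  by apply/eqP => e; move: hpipos; rewrite e (v1 hv) ltxx.
have hns := nonscalar.
case: (ord2P a) hab => ->; case: (ord2P b) => -> // _.
  exact: (core hpi0 x1 psiD psiZ hns hpsi).
exact: (core2 hpi0 x1 psiD psiZ hns hpsi).
Qed.

Lemma dl01 (G : 'M[K]_2) :
  (G *m delta_mx 0 1 *m adj2 G) 0 1 = G 0 0 * G 0 0 /\ (G *m delta_mx 0 1 *m adj2 G) 1 0 = - (G 1 0 * G 1 0).
Proof. split; rewrite !(mxE, big_ord2) /= ?mulr1n ?mulr0n; ring. Qed.
Lemma dl10 (G : 'M[K]_2) :
  (G *m delta_mx 1 0 *m adj2 G) 0 1 = - (G 0 1 * G 0 1) /\ (G *m delta_mx 1 0 *m adj2 G) 1 0 = G 1 1 * G 1 1.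
Proof. split; rewrite !(mxE, big_ord2) /= ?mulr1n ?mulr0n; ring. Qed.

Lemma span_delta (a b : 'I_2) (s : seq Gam) : a != b ->
  (forall u, Ups u -> (mxvec (rho u) <= Fam one rho s)%MS) ->
  exists c : 'I_(size s) -> K, E *m delta_mx a b *m invmx E = \sum_k c k *: rho (nth one s k).
Proof.
move=> hab hs; case: (span_or_fun (E *m delta_mx a b *m invmx E) hs) => // [[C [j [hne hC]]]].
by move: hne; rewrite (no_fun hab hC) eqxx.
Qed.

Lemma ad_term (Nu : int) (g : Gam) (s : seq Gam) (c : 'I_(size s) -> K) (a b : 'I_2) bc :
  (forall u, Ups u -> mxb v (cj E (rho u)) Nu) -> good one Ups s ->
  E *m delta_mx a b *m invmx E = \sum_k c k *: rho (nth one s k) ->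
  (forall k, vge v (c k) bc) ->
  mxb v (cj E (rho g) *m delta_mx a b *m adj2 (cj E (rho g))) (bc + Nu).
Proof.
move=> hb gs hc hbc.
have hd : \det (rho g) = 1 := hrhoSL g.
rewrite -(cj_adj2 hE) // -[delta_mx a b](ucjK hE) -!(cjM hE).
rewrite /ucj hc mulmx_sumr mulmx_suml (cj_sum E).
have -> : \sum_k cj E (rho g *m (c k *: rho (nth one s k)) *m adj2 (rho g)) =
          \sum_k c k *: cj E (rho g *m rho (nth one s k) *m adj2 (rho g)).
  by apply: eq_bigr => k _; rewrite -scalemxAr -scalemxAl (cjZ E).
apply: (mxb_sum (M := fun k => cj E (rho g *m rho (nth one s k) *m adj2 (rho g))) hv hbc) => k.
have := peq_sym (rho_conj hGam hrhoSL hrho_hom g (nth one s k)).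
have hu := Ups_conj g (gs k).
case=> ->; first exact: hb.
by rewrite (cjN E); apply: (mxbN hv); apply: hb.
Qed.

Lemma ad_bound (Nu : int) : (forall u, Ups u -> mxb v (cj E (rho u)) Nu) ->
  exists Nb, Nb <= 0 /\ forall g, mxb v (cj E (rho g)) Nb.
Proof.
move=> hb.
have [s [gs hs]] := fam_max one rho Ups.
have [c1 hc1] := @span_delta 0 1 s isT hs.
have [c2 hc2] := @span_delta 1 0 s isT hs.
have [b1 hb1] := @cbound _ v _ c1.
have [b2 hb2] := @cbound _ v _ c2.
exists (Order.min (Order.min (b1 + Nu) (b2 + Nu)) 0); split; first by rewrite ge_min lexx orbT.
move=> g.
have h1 := ad_term g hb gs hc1 hb1.
have h2 := ad_term g hb gs hc2 hb2.
have [e1 e2] := dl01 (cj E (rho g)).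
have [e3 e4] := dl10 (cj E (rho g)).
move=> i j.
apply: (vge_of_sq hv); first by rewrite ge_min lexx orbT.
case: (ord2P i) => ->; case: (ord2P j) => ->.
- by have := h1 0 1; rewrite e1 => h; apply: (vge_le h); lia.
- by have := vgeN hv (h2 0 1); rewrite e3 opprK => h; apply: (vge_le h); lia.
- by have := vgeN hv (h1 1 0); rewrite e2 opprK => h; apply: (vge_le h); lia.
- by have := h2 1 0; rewrite e4 => h; apply: (vge_le h); lia.
Qed.

End Main.

Section Final.
Variable K : fieldType.
Variable v : K -> int.
Hypothesis hv : is_discrete_valuation v.
Variables (Gam : Type) (mul : Gam -> Gam -> Gam) (inv : Gam -> Gam) (one : Gam).
Hypothesis hGam : is_group mul inv one.
Variable rho : Gam -> 'M[K]_2.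
Hypothesis hrhoSL : forall g, in_SL2 (rho g).
Hypothesis hrho_hom : forall g h, psl_eq (rho (mul g h)) (rho g *m rho h).
Variable E : 'M[K]_2.
Hypothesis hE : E \in unitmx.
Variable Nb : int.
Hypothesis hNb : Nb <= 0.
Hypothesis hG : forall g, mxb v (cj E (rho g)) Nb.
Variable pi : K.
Hypotheses (hpi0 : pi != 0) (hpipos : 0 < v pi).

Definition vecb (x : 'cV[K]_2) b := forall i, vge v (x i 0) b.

Lemma vecbM (A : 'M[K]_2) x a b : mxb v A a -> vecb x b -> vecb (A *m x) (a + b).
Proof.
move=> hA hx i; rewrite mxE; apply: (vge_sum hv) => k _; exact: (vgeM hv (hA i k) (hx k)).
Qed.

Lemma OO_vecb x : OO v x <-> vecb x 0.
Proof.
split; first by move=> [h0 h1] i; case: (ord2P i) => ->.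
by move=> h; split; apply: h.
Qed.

Definition Lam x := forall g, OO v (cj E (rho g) *m x).

Lemma LamD x y : Lam x -> Lam y -> Lam (x + y).
Proof. by move=> hx hy g; rewrite mulmxDr; apply: (OO_add hv). Qed.

Lemma OON x : OO v x -> OO v (- x).
Proof. by move=> /OO_vecb h; apply/OO_vecb => i; rewrite mxE; apply: (vgeN hv). Qed.

Lemma LamN x : Lam x -> Lam (- x).
Proof. by move=> hx g; rewrite mulmxN; apply: OON. Qed.

Lemma cj_peq A B : psl_eq A B -> psl_eq (cj E A) (cj E B).
Proof. by case=> ->; [left|right; rewrite (cjN E)]. Qed.

Lemma OO_peq A B x : psl_eq A B -> OO v (B *m x) -> OO v (A *m x).
Proof. by case=> -> // h; rewrite mulNmx; apply: OON. Qed.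

Lemma Lam_OO x : Lam x -> OO v x.
Proof.
move=> hx; have := hx one.
have := cj_peq (rho_one hGam hrhoSL hrho_hom); rewrite (cj1 hE) => hp.
by case: hp => ->; rewrite ?mulNmx ?mul1mx // => /OON; rewrite opprK.
Qed.

Lemma Lam_small x : vecb x (- Nb) -> Lam x.
Proof.
move=> hx g; apply/OO_vecb; have := vecbM (hG g) hx.
by rewrite subrr.
Qed.

Lemma stab_peq Y h : psl_eq Y (rho h) -> forall x, Lam x -> Lam (cj E Y *m x).
Proof.
move=> hY x hx g; rewrite mulmxA -(cjM hE).
apply: (OO_peq (cj_peq (peq_mul (peq_refl (rho g)) hY))).
apply: (OO_peq (cj_peq (rho_mul hrho_hom g h))).
exact: hx.
Qed.

Definition Hs (Y : 'M[K]_2) := [/\ \det Y = 1, forall x, Lam x -> Lam (cj E Y *m x)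
   & forall x, Lam x -> Lam (cj E (adj2 Y) *m x)].

Lemma Hs_rho g : Hs (rho g).
Proof.
split; first exact: hrhoSL.
  exact: (stab_peq (peq_refl _)).
exact: (stab_peq (peq_sym (rho_inv hGam hrhoSL hrho_hom g))).
Qed.

Lemma adj2_1 : adj2 (1%:M : 'M[K]_2) = 1%:M.
Proof. mx2; rewrite ?mulr1n ?mulr0n ?oppr0 //. Qed.

Lemma adj2K (A : 'M[K]_2) : adj2 (adj2 A) = A.
Proof. mx2; rewrite ?opprK //. Qed.

Lemma det_adj2 (A : 'M[K]_2) : \det (adj2 A) = \det A.
Proof. rewrite !det2 !mxE /=; ring. Qed.

Lemma Hs_sub : psl_subgroup Hs.
Proof.
split.
- split; first by move=> A [].
  move=> A [hd h1 h2]; split; first by rewrite det2N.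
    by move=> x hx; rewrite (cjN E) mulNmx; apply: LamN; apply: h1.
  by move=> x hx; rewrite adj2N (cjN E) mulNmx; apply: LamN; apply: h2.
- split; first exact: det1.
    by move=> x hx; rewrite (cj1 hE) mul1mx.
  by move=> x hx; rewrite adj2_1 (cj1 hE) mul1mx.
- move=> A B [hA1 hA2 hA3] [hB1 hB2 hB3]; split.
  + by rewrite det_mulmx hA1 hB1 mulr1.
  + by move=> x hx; rewrite (cjM hE) -mulmxA; apply: hA2; apply: hB2.
  + by move=> x hx; rewrite adj2M (cjM hE) -mulmxA; apply: hB3; apply: hA3.
- move=> A [hA1 hA2 hA3]; rewrite invmx_adj2 //; split.
  + by rewrite det_adj2.
  + exact: hA3.
  + by rewrite adj2K.
Qed.

Lemma Hs_bounded : exists N0, forall Y, Hs Y -> mxb v Y N0.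
Proof.
pose q := `|Nb|%N.
pose sp := pi ^+ q.
have sp0 : sp != 0 by rewrite expf_neq0.
have vsp : - Nb <= v sp by rewrite /sp (vX hv _ hpi0); rewrite /q; nia.
have [bE hbE] := mxb_ex v E.
have [bI hbI] := mxb_ex v (invmx E).
exists (bE + - v sp + bI) => Y [hd h1 h2].
have hc : mxb v (cj E Y) (- v sp).
  move=> i j.
  have hx : Lam (sp *: delta_mx j 0).
    apply: Lam_small => k; rewrite !mxE.
    case: (_ && _); rewrite /= ?mulr1n ?mulr0n ?mulr1 ?mulr0; last exact: vge0.
    by right.
  have := Lam_OO (h1 _ hx); move/OO_vecb/(_ i).
  rewrite -scalemxAr -colE !mxE => h.
  by have := vge_scale hv sp0 h; rewrite sub0r.
rewrite -(cjK hE Y) /ucj.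
exact: (mxbM hv (mxbM hv hbE hc) hbI).
Qed.

Lemma det2_diff (L Y : 'M[K]_2) : \det L - \det Y =
  (L 0 0 - Y 0 0) * L 1 1 + Y 0 0 * (L 1 1 - Y 1 1) - (L 0 1 - Y 0 1) * L 1 0 - Y 0 1 * (L 1 0 - Y 1 0).
Proof. rewrite !det2; ring. Qed.

Lemma Hs_closed (Ys : nat -> 'M[K]_2) L : (forall k, Hs (Ys k)) ->
  (forall n, exists k0, forall k, (k0 <= k)%N -> near_mx v (Ys k) L n) -> Hs L.
Proof.
move=> hY hL.
have [N0 hN0] := Hs_bounded.
have hYb : forall k, mxb v (Ys k) N0 by move=> k; apply: hN0.
pose m0 := Order.min N0 0.
have hLb : mxb v L m0.
  have [k0 hk0] := hL 0; have hn := hk0 k0 (leqnn _).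
  move=> i j; have -> : L i j = Ys k0 i j + (L i j - Ys k0 i j) by ring.
  apply: (vgeD hv); first by apply: vge_le (hYb k0 i j) _; rewrite ge_min lexx.
  by apply: vge_le (hn i j) _; rewrite ge_min lexx orbT.
have [bE hbE] := mxb_ex v E.
have [bI hbI] := mxb_ex v (invmx E).
have small : forall (D : 'M[K]_2) x, mxb v D (- Nb - bI - bE) -> Lam x -> Lam (cj E D *m x).
  move=> D x hD hx; apply: Lam_small.
  have := vecbM (mxbM hv (mxbM hv hbI hD) hbE) (proj1 (OO_vecb x) (Lam_OO hx)).
  move=> h i; apply: vge_le (h i) _; lia.
pose n1 := - Nb - bI - bE.
have [k1 hk1] := hL n1.
have hD : mxb v (L - Ys k1) n1.
  by move=> i j; rewrite !mxE; exact: (hk1 k1 (leqnn _) i j).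
have [hd1 hs1 ha1] := hY k1.
split.
- apply/eqP; rewrite -subr_eq0; apply/eqP; apply: vge_eq0 => n.
  have [k hk] := hL (n - m0).
  have hn := hk k (leqnn _).
  have [hdk _ _] := hY k.
  rewrite -hdk det2_diff.
  have hm : forall a b, vge v (a - b) (n - m0) -> forall c, vge v c m0 -> vge v ((a - b) * c) n.
    move=> a b hab c hc; have := vgeM hv hab hc; by rewrite subrK.
  have hm' : forall a b, vge v (a - b) (n - m0) -> forall c, vge v c m0 -> vge v (c * (a - b)) n.
    by move=> a b hab c hc; rewrite mulrC; apply: hm.
  have hYm : forall i j, vge v (Ys k i j) m0.
    by move=> i j; apply: vge_le (hYb k i j) _; rewrite ge_min lexx.
  apply: (vgeB hv); [apply: (vgeB hv); [apply: (vgeD hv)|]|].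
  + exact: hm (hn 0 0) _ (hLb 1 1).
  + exact: hm' (hn 1 1) _ (hYm 0 0).
  + exact: hm (hn 0 1) _ (hLb 1 0).
  + exact: hm' (hn 1 0) _ (hYm 0 1).
- move=> x hx.
  have -> : cj E L *m x = cj E (Ys k1) *m x + cj E (L - Ys k1) *m x.
    by rewrite -mulmxDl -(cjD E) addrC subrK.
  by apply: LamD; [apply: hs1|apply: small].
- move=> x hx.
  have -> : cj E (adj2 L) *m x = cj E (adj2 (Ys k1)) *m x + cj E (adj2 (L - Ys k1)) *m x.
    by rewrite -mulmxDl -(cjD E) adj2B addrC subrK.
  by apply: LamD; [apply: ha1|apply: small => //; apply: (mxb_adj2 hv); exact: hD].
Qed.

End Final.

Unset Implicit Arguments.

Theorem lemma4p14
  (K : fieldType) (v : K -> int)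
  (hv : is_discrete_valuation v) (hcomplete : complete_val v)
  (hres : finite_residue_field v)
  (Gam : Type) (mul : Gam -> Gam -> Gam) (inv : Gam -> Gam) (one : Gam)
  (hGam : is_group mul inv one)
  (rho : Gam -> 'M[K]_2)
  (hrhoSL : forall g, in_SL2 (rho g))
  (hrho_hom : forall g h, psl_eq (rho (mul g h)) (rho g *m rho h))
  (Ups : Gam -> Prop) (hUps : is_normal_subgroup mul inv one Ups)
  (hfix : exists p, valid_point v p /\ forall u, Ups u -> fixes_point (rho u) p)
  (hzar : zariski_dense_SL2 (fun A => exists g, psl_eq A (rho g)))
  (hnoncpt : ~ exists H, [/\ psl_subgroup H, psl_compact v H
                           & forall g, H (rho g)]) :
  forall u, Ups u -> psl_eq (rho u) 1%:M.
Proof.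
move=> u hu; apply: NNPP => hnt.
have [pi [hpi0 hpipos hpimin]] := unif hv.
have hpi1 : (1 <= v pi)%R by lia.
have [p [hp hpfix]] := hfix.
have [E [hE hEb]] := fix_bound hv hpi0 hpi1 hp.
have hbnd : forall w, Ups w -> mxb v (cj E (rho w)) (- v pi).
  by move=> w hw; apply: hEb; [exact: hrhoSL|exact: hpfix].
have [Nb [hNb hG]] := ad_bound hv hGam hrhoSL hrho_hom hUps hzar hE hpi0 hpipos hu hnt hbnd.
apply: hnoncpt; exists (Hs v rho E); split.
- exact: (Hs_sub hv rho hE).
- split; first by case: (Hs_sub hv rho hE).
  have [N0 hN0] := Hs_bounded hv hGam hrhoSL hrho_hom hE hNb hG hpi0 hpipos.
  move=> I U hU hcov.
  apply: (heine_borel hv hcomplete hres hpi0 hpipos hpimin (N0 := N0)) => //.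
  + by move=> Y [].
  + exact: (Hs_closed hv hGam hrhoSL hrho_hom hE hNb hG hpi0 hpipos).
- exact: (Hs_rho hv hGam hrhoSL hrho_hom hE).
Qed.
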